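(* For $n\in\{2,3\}$, in $\mathcal X(GU(n,2),\Phi(n,2))$: (a) The symmetrization, with relations $\mathcal R_0$, $\mathcal R_1\cup\mathcal R_2$, $\mathcal R_3$, $\mathcal R_4\cup\mathcal R_5$ (in this column order), is an association scheme whose character table (rows followed by multiplicities) is, for $n=2$: $(1,2,2,4)$ [1], $(1,-1,2,-2)$ [2], $(1,2,-1,-2)$ [2], $(1,-1,-1,1)$ [4]; and for $n=3$: $(1,2,8,16)$ [1], $(1,-1,-4,4)$ [6], $(1,2,-1,-2)$ [8], $(1,-1,2,-2)$ [12]. (b) The partition with relations $\mathcal R_0$, $\widehat R_1=\mathcal R_1\cup\mathcal R_2$, $\widehat R_2=\mathcal R_3\cup\mathcal R_4\cup\mathcal R_5$ yields a 2-class fusion scheme whose character table (rows followed by multiplicities) is, for $n=2$: $(1,2,6)$ [1], $(1,2,-3)$ [2], $(1,-1,0)$ [6]; and for $n=3$: $(1,2,24)$ [1], $(1,2,-3)$ [8], $(1,-1,0)$ [18].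
   Context: Let $\Phi=\Phi(n,2)=\{x\in\mathbb{F}_4^n\setminus\{0\}:\langle x,x\rangle=0\}$, $\langle x,y\rangle=\sum_kx_ky_k^2$, and $\mathcal X(GU(n,2),\Phi(n,2))$ the association scheme of orbitals of $GU(n,2)$ acting on $\Phi$ by $x\mapsto xU$. Fix a primitive $\alpha\in\mathbb{F}_4$. For $n\in\{2,3\}$ the relations are $\mathcal R_l=\{(x,y)\in\Phi^2:y=\alpha^lx\}$ ($l=0,1,2$) and $\mathcal R_l=\{(x,y)\in\Phi^2:\langle x,y\rangle=\alpha^l\}$ ($l=3,4,5$). A fusion scheme of $\mathcal X$ is an association scheme on the same set each of whose relations is a union of relations of $\mathcal X$; the symmetrization fuses each relation with its converse. Character table: $P=[p_j(i)]$ with $A_j=\sum_ip_j(i)E_i$ over the primitive idempotents $E_i$ ($E_0=\frac1{|\Phi|}J$ first), multiplicity $=\mathrm{rank}\,E_i$; rows are given up to ordering of $E_1,\dots$. *)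

(* Defs.v *)
From HB Require Import structures.
From mathcomp Require Import all_boot all_order all_algebra all_field.
Import Order.TTheory GRing.Theory Num.Theory.
Local Open Scope ring_scope.

(* Hermitian form <x,y> = sum_k x_k y_k^2 on F^n (F = F_4, conjugation y |-> y^2). *)
Definition herm (F : finFieldType) (n : nat) (x y : 'rV[F]_n) : F :=
  \sum_(k < n) x 0 k * (y 0 k) ^+ 2.

Definition Phi (F : finFieldType) (n : nat) : {set 'rV[F]_n} :=
  [set x : 'rV[F]_n | (x != 0) && (herm F n x x == 0)].

Definition origR (F : finFieldType) (n : nat) (alpha : F) (l : nat) : rel 'rV[F]_n :=
  fun x y => if (l < 3)%N then y == alpha ^+ l *: x else herm F n x y == alpha ^+ l.

Definition fuse (T : Type) (R : nat -> rel T) (s : seq nat) : rel T :=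
  fun x y => has (fun l => R l x y) s.

Definition is_assoc_scheme (T : finType) (X : {set T}) (d : nat)
  (R : 'I_d.+1 -> rel T) : Prop :=
  [/\
      (forall x y, x \in X -> y \in X -> exists! i, R i x y),
      (forall i, exists x y, [/\ x \in X, y \in X & R i x y]),
      (forall x y, x \in X -> y \in X -> (R ord0 x y <-> x = y)),
      (forall i, exists i', forall x y, x \in X -> y \in X -> R i x y = R i' y x) &
      (forall i j k, exists p : nat, forall x y, x \in X -> y \in X -> R k x y ->
          #|[set z in X | R i x z && R j z y]| = p)].

Definition adjmx (T : finType) (X : {set T}) (R : rel T) : 'M[algC]_#|X| :=
  \matrix_(i, j) ((R (enum_val i) (enum_val j))%:R).

(* P is the character table (P i j = p_j(i)) with multiplicities m:
   E_0..E_d are the primitive idempotents of the Bose-Mesner algebra,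
   E_0 = J/|X|, A_j = sum_i P i j E_i, m_i = rank E_i. *)
Definition is_char_table (T : finType) (X : {set T}) (d : nat)
  (R : 'I_d.+1 -> rel T) (P : 'M[algC]_d.+1) (m : 'I_d.+1 -> nat) : Prop :=
  exists E : 'I_d.+1 -> 'M[algC]_#|X|,
  [/\ (forall i j, E i *m E j = if i == j then E i else 0),
      (forall i, E i != 0),
      \sum_i E i = 1%:M,
      E ord0 = (#|X|%:R)^-1 *: const_mx 1 &
      [/\ (forall i, exists c : 'I_d.+1 -> algC, E i = \sum_j c j *: adjmx T X (R j)),
      (forall j, adjmx T X (R j) = \sum_i P i j *: E i) &
      (forall i, \rank (E i) = m i)]].

Definition mx_of (d : nat) (rows : seq (seq int)) : 'M[algC]_d.+1 :=
  \matrix_(i, j) ((nth 0 (nth [::] rows i) j)%:~R).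

Definition mults (d : nat) (ms : seq nat) : 'I_d.+1 -> nat := fun i => nth 0%N ms i.

Definition symR (F : finFieldType) (n : nat) (alpha : F) : 'I_4 -> rel 'rV[F]_n :=
  fun i => fuse 'rV[F]_n (origR F n alpha) (nth [::] [:: [:: 0%N]; [:: 1%N; 2%N]; [:: 3%N]; [:: 4%N; 5%N]] i).

Definition fusR (F : finFieldType) (n : nat) (alpha : F) : 'I_3 -> rel 'rV[F]_n :=
  fun i => fuse 'rV[F]_n (origR F n alpha) (nth [::] [:: [:: 0%N]; [:: 1%N; 2%N]; [:: 3%N; 4%N; 5%N]] i).

Definition tableA (n : nat) : 'M[algC]_4 :=
  if n == 2%N then mx_of 3 [:: [:: 1; 2; 2; 4]; [:: 1; -1; 2; -2]; [:: 1; 2; -1; -2]; [:: 1; -1; -1; 1]]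
  else mx_of 3 [:: [:: 1; 2; 8; 16]; [:: 1; -1; -4; 4]; [:: 1; 2; -1; -2]; [:: 1; -1; 2; -2]].
Definition multA (n : nat) : 'I_4 -> nat :=
  if n == 2%N then mults 3 [:: 1; 2; 2; 4]%N else mults 3 [:: 1; 6; 8; 12]%N.

Definition tableB (n : nat) : 'M[algC]_3 :=
  if n == 2%N then mx_of 2 [:: [:: 1; 2; 6]; [:: 1; 2; -3]; [:: 1; -1; 0]]
  else mx_of 2 [:: [:: 1; 2; 24]; [:: 1; 2; -3]; [:: 1; -1; 0]].
Definition multB (n : nat) : 'I_3 -> nat :=
  if n == 2%N then mults 2 [:: 1; 2; 6]%N else mults 2 [:: 1; 8; 18]%N.

(* Main.v *)
Require Import Defs.
From mathcomp Require Import all_boot all_order all_algebra all_field.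
From mathcomp Require Import ring algC.
Set Implicit Arguments. Unset Strict Implicit. Unset Printing Implicit Defensive.
Import Order.TTheory GRing.Theory Num.Theory.
Local Open Scope ring_scope.

Definition addK (a b : nat) : nat :=
  nth 0%N (nth [::] [:: [:: 0;1;2;3]; [:: 1;0;3;2]; [:: 2;3;0;1]; [:: 3;2;1;0]]%N a) b.
Definition mulK (a b : nat) : nat :=
  nth 0%N (nth [::] [:: [:: 0;0;0;0]; [:: 0;1;2;3]; [:: 0;2;3;1]; [:: 0;3;1;2]]%N a) b.

Lemma addK_lt a b : (a < 4)%N -> (b < 4)%N -> (addK a b < 4)%N.
Proof. by case: a => [|[|[|[|]]]] //; case: b => [|[|[|[|]]]]. Qed.
Lemma mulK_lt a b : (a < 4)%N -> (b < 4)%N -> (mulK a b < 4)%N.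
Proof. by case: a => [|[|[|[|]]]] //; case: b => [|[|[|[|]]]]. Qed.

Section Field4.
Variables (F : finFieldType) (hF : #|F| = 4%N) (alpha : F)
  (halpha : 3.-primitive_root alpha).

Lemma a3 : alpha ^+ 3 = 1. Proof. exact: prim_expr_order halpha. Qed.

Lemma char2 : (1 + 1 : F) = 0.
Proof.
have [p pr pc] := finPcharP F.
have := card_pprimeChar pc.
have -> : #|(pPrimeCharType pc)| = 4%N by rewrite -hF.
move=> h4.
have p2 : p = 2%N.
  have : (p %| 4)%N.
    rewrite h4; case: (logn _ _) h4 => [|k]; first by rewrite expn0.
    by move=> _; rewrite expnS dvdn_mulr.
  move: pr; case: p {pc h4} => [|[|[|[|[|p]]]]] //.
  all: try by [].
  idtac.
by move: (pcharf0 pc); rewrite p2 mulr2n.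
Qed.

Lemma addxx (x : F) : x + x = 0.
Proof. by rewrite -[x]mulr1 -mulrDr char2 mulr0. Qed.

Lemma alpha_neq1 : alpha != 1.
Proof. by have := eq_prim_root_expr halpha 1 0; rewrite expr1 expr0 => ->. Qed.
Lemma alpha2_neq1 : alpha ^+ 2 != 1.
Proof. by have := eq_prim_root_expr halpha 2 0; rewrite expr0 => ->. Qed.
Lemma alpha2_neqa : alpha ^+ 2 != alpha.
Proof. by have := eq_prim_root_expr halpha 2 1; rewrite expr1 => ->. Qed.
Lemma alpha_neq0 : alpha != 0.
Proof. apply/eqP=> h; move: a3; rewrite h expr0n => /eqP; by rewrite eq_sym oner_eq0. Qed.
Lemma alpha2_neq0 : alpha ^+ 2 != 0.
Proof. by rewrite expf_neq0 // alpha_neq0. Qed.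

Lemma aa : alpha ^+ 2 = alpha + 1.
Proof.
have h : (alpha - 1) * (alpha ^+ 2 + alpha + 1) = alpha ^+ 3 - 1 by ring.
move: h; rewrite a3 subrr => /eqP; rewrite mulf_eq0 subr_eq0 (negbTE alpha_neq1) /=.
by rewrite -addrA addr_eq0 => /eqP ->; rewrite -[- _]addr0 -(addxx (alpha+1)) addrA addNr add0r.
Qed.

Definition phi (a : nat) : F := nth 0 [:: 0; 1; alpha; alpha ^+ 2] a.

Lemma s1a : 1 + alpha = alpha ^+ 2. Proof. by rewrite aa addrC. Qed.
Lemma sa1 : alpha + 1 = alpha ^+ 2. Proof. by rewrite aa. Qed.
Lemma s1a2 : 1 + alpha ^+ 2 = alpha. Proof. by rewrite aa addrC -addrA addxx addr0. Qed.
Lemma sa21 : alpha ^+ 2 + 1 = alpha. Proof. by rewrite addrC s1a2. Qed.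
Lemma saa2 : alpha + alpha ^+ 2 = 1. Proof. by rewrite aa addrA addxx add0r. Qed.
Lemma sa2a : alpha ^+ 2 + alpha = 1. Proof. by rewrite addrC saa2. Qed.
Lemma maa : alpha * alpha = alpha ^+ 2. Proof. by rewrite expr2. Qed.
Lemma maa2 : alpha * alpha ^+ 2 = 1. Proof. by rewrite -exprS a3. Qed.
Lemma ma2a : alpha ^+ 2 * alpha = 1. Proof. by rewrite -exprSr a3. Qed.
Lemma ma2a2 : alpha ^+ 2 * alpha ^+ 2 = alpha.
Proof. by rewrite -exprD (_ : (2 + 2 = 3 + 1)%N) // exprD a3 mul1r expr1. Qed.

Lemma phi_add a b : (a < 4)%N -> (b < 4)%N -> phi (addK a b) = phi a + phi b.
Proof.
case: a => [|[|[|[|]]]] //; case: b => [|[|[|[|]]]] // _ _; rewrite /phi /=;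
by rewrite ?add0r ?addr0 ?addxx ?s1a ?sa1 ?s1a2 ?sa21 ?saa2 ?sa2a.
Qed.

Lemma phi_mul a b : (a < 4)%N -> (b < 4)%N -> phi (mulK a b) = phi a * phi b.
Proof.
case: a => [|[|[|[|]]]] //; case: b => [|[|[|[|]]]] // _ _; rewrite /phi /=;
by rewrite ?mul0r ?mulr0 ?mul1r ?mulr1 ?maa ?maa2 ?ma2a ?ma2a2.
Qed.

Lemma uniq4 : uniq [:: 0; 1; alpha; alpha ^+ 2].
Proof.
rewrite /= !inE !negb_or -!andbA.
rewrite eq_sym oner_eq0 eq_sym alpha_neq0 eq_sym alpha2_neq0.
by rewrite eq_sym alpha_neq1 eq_sym alpha2_neq1 eq_sym alpha2_neqa.
Qed.

Lemma phi_inj a b : (a < 4)%N -> (b < 4)%N -> phi a = phi b -> a = b.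
Proof. by move=> ha hb /eqP; rewrite /phi nth_uniq ?uniq4 // => /eqP. Qed.

Lemma phi_surj x : exists a, (a < 4)%N /\ phi a = x.
Proof.
set s := [:: 0; 1; alpha; alpha ^+ 2].
have hs : x \in s.
  have hc : #|s| = #|F| by rewrite hF; apply/card_uniqP; exact: uniq4.
  by have /subset_cardP := hc => /(_ (subset_predT _)) ->.
by exists (index x s); rewrite index_mem /phi nth_index.
Qed.

End Field4.

Fixpoint allv (n : nat) : seq (seq nat) :=
  if n is n'.+1 then [seq a :: w | a <- iota 0 4, w <- allv n'] else [:: [::]].

Lemma allvP n w : (w \in allv n) = (size w == n) && all (fun a => (a < 4)%N) w.
Proof.
elim: n w => [|n IH] w; first by case: w.
apply/allpairsP/idP => [[[a w'] [ha hw ->]]|].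
  change (is_true (a \in iota 0 4)) in ha; change (is_true (w' \in allv n)) in hw.
  move: ha hw; rewrite mem_iota IH => /andP[_ ha] /andP[hs hw] /=; by rewrite eqSS hs ha hw.
case: w => [|a w] //=; move=> /andP[hs /andP[ha hw]].
exists (a, w); split => //; first by change (is_true (a \in iota 0 4)); rewrite mem_iota.
by change (is_true (w \in allv n)); rewrite IH -eqSS hs hw.
Qed.

Lemma allv_uniq n : uniq (allv n).
Proof.
elim: n => [|n IH] //.
have := @allpairs_uniq nat (seq nat) (seq nat) (fun a w => a :: w) (iota 0 4) (allv n).
move=> h; apply: h => //.
by move=> [a w] [b v] _ _ /= [-> ->].
Qed.

Fixpoint hermK (u w : seq nat) : nat :=
  match u, w with
  | a :: u', b :: w' => addK (mulK a (mulK b b)) (hermK u' w')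
  | _, _ => 0%N
  end.

Lemma hermK_lt u w : all (fun a => (a < 4)%N) u -> all (fun a => (a < 4)%N) w ->
  (hermK u w < 4)%N.
Proof.
elim: u w => [|a u IH] [|b w] //= /andP[ha hu] /andP[hb hw].
by apply: addK_lt; [apply: mulK_lt => //; apply: mulK_lt|apply: IH].
Qed.

Section Vec.
Variables (F : finFieldType) (hF : #|F| = 4%N) (alpha : F)
  (halpha : 3.-primitive_root alpha) (n : nat).

Local Notation phi := (phi alpha).

Definition decv (w : seq nat) : 'rV[F]_n := \row_(i < n) phi (nth 0%N w i).

Lemma allv_lt w k : w \in allv n -> (nth 0%N w k < 4)%N.
Proof.
rewrite allvP => /andP[_ /allP h]; case: (ltnP k (size w)) => hk.
  by apply: h; rewrite mem_nth.
by rewrite nth_default.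
Qed.

Lemma decv_inj u w : u \in allv n -> w \in allv n -> decv u = decv w -> u = w.
Proof.
move=> hu hw /matrixP h.
have su : size u = n by move: hu; rewrite allvP => /andP[/eqP].
have sw : size w = n by move: hw; rewrite allvP => /andP[/eqP].
apply: (@eq_from_nth _ 0%N); first by rewrite su sw.
move=> i; rewrite su => hi; have := h 0 (Ordinal hi); rewrite !mxE /=.
exact: (phi_inj halpha) (allv_lt _ hu) (allv_lt _ hw).
Qed.

Definition psi (x : F) : nat := find (fun a => phi a == x) (iota 0 4).

Lemma psiP x : (psi x < 4)%N /\ phi (psi x) = x.
Proof.
have hh : has (fun a => phi a == x) (iota 0 4).
  have [a [ha <-]] := phi_surj hF halpha x.
  by apply/hasP; exists a; rewrite ?mem_iota.
split; first by move: hh; rewrite has_find size_iota.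
have := nth_find 0%N hh; rewrite nth_iota ?add0n => [/eqP //|].
by move: hh; rewrite has_find size_iota.
Qed.

Lemma decv_surj v : exists2 w, w \in allv n & decv w = v.
Proof.
exists (map (fun j => psi (v 0 j)) (enum 'I_n)).
  rewrite allvP size_map size_enum_ord eqxx /=; apply/allP => a /mapP[i _ ->].
  by case: (psiP (v 0 i)).
apply/matrixP => i j; rewrite !mxE (nth_map j) ?size_enum_ord // nth_ord_enum.
by case: (psiP (v 0 j)) => _ ->; rewrite (ord1 i).
Qed.

Lemma card_dec (P : pred 'rV[F]_n) : #|P| = count (fun w => P (decv w)) (allv n).
Proof.
rewrite -(count_map decv P).
have -> : #|P| = count P (enum 'rV[F]_n).
  rewrite cardE /enum_mem size_filter.
  by rewrite -[RHS]/(count P (enum _)) enumT.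
apply/esym/permP/uniq_perm.
- rewrite map_inj_in_uniq ?allv_uniq //; exact: decv_inj.
- exact: enum_uniq.
- move=> v; rewrite mem_enum; apply/mapP.
  by have [w hw <-] := decv_surj v; exists w.
Qed.

End Vec.

Definition isPhiK (w : seq nat) : bool := has (fun a => a != 0%N) w && (hermK w w == 0%N).
Definition origK (l : nat) (u w : seq nat) : bool :=
  if (l < 3)%N then w == map (mulK l.+1) u else hermK u w == (l - 2)%N.

Section Vec2.
Variables (F : finFieldType) (hF : #|F| = 4%N) (alpha : F)
  (halpha : 3.-primitive_root alpha).

Local Notation phi := (phi alpha).

Lemma herm_aux m u w : size u = m -> size w = m ->
  all (fun a => (a < 4)%N) u -> all (fun a => (a < 4)%N) w ->
  \sum_(k < m) phi (nth 0%N u k) * phi (nth 0%N w k) ^+ 2 = phi (hermK u w).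
Proof.
elim: u m w => [|a u IH] m [|b w] /=.
- by move=> <- _ _ _; rewrite big_ord0.
- by move=> <-.
- by move=> <-.
move=> <- [hs]; move=> /andP[ha hu] /andP[hb hw].
rewrite big_ord_recl /= (IH _ w) //.
rewrite phi_add //; last by apply: hermK_lt.
  by rewrite !phi_mul // ?expr2 //; apply: mulK_lt.
by apply: mulK_lt => //; apply: mulK_lt.
Qed.

Variable n : nat.
Local Notation decv := (@decv F alpha n).

Lemma herm_dec u w : u \in allv n -> w \in allv n ->
  herm F n (decv u) (decv w) = phi (hermK u w).
Proof.
rewrite !allvP => /andP[/eqP su hu] /andP[/eqP sw hw].
rewrite /herm -(herm_aux su sw hu hw); apply: eq_bigr => k _.
by rewrite !mxE.
Qed.

Lemma lt_hermK u w : u \in allv n -> w \in allv n -> (hermK u w < 4)%N.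
Proof.
by rewrite !allvP => /andP[_ hu] /andP[_ hw]; apply: hermK_lt.
Qed.

Lemma Phi_dec w : w \in allv n -> (decv w \in Phi F n) = isPhiK w.
Proof.
move=> hw; rewrite inE herm_dec // /isPhiK.
have -> : (decv w == 0) = all (fun a => a == 0%N) w.
  apply/eqP/allP => [h a ha | h].
    have [k hk ->] : exists2 k, (k < size w)%N & a = nth 0%N w k.
      by exists (index a w); rewrite ?index_mem ?nth_index.
    have sw : size w = n by move: hw; rewrite allvP => /andP[/eqP].
    have hk' : (k < n)%N by rewrite -sw.
    move/matrixP: h => /(_ 0 (Ordinal hk')); rewrite !mxE /=.
    by move/(@phi_inj _ _ halpha _ 0%N (allv_lt _ hw)) => -> //.
  apply/matrixP => i j; rewrite !mxE.
  case: (ltnP j (size w)) => hj; last by rewrite nth_default.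
  by rewrite (eqP (h _ (mem_nth 0%N hj))).
rewrite -has_predC; congr (_ && _).
apply/eqP/eqP => [h|->] //; apply: (phi_inj halpha) => //.
exact: lt_hermK.
Qed.

Lemma alpha_pow l : (l < 6)%N ->
  alpha ^+ l = if (l < 3)%N then phi l.+1 else phi (l - 2).
Proof.
case: l => [|[|[|[|[|[|l]]]]]] // _; rewrite /phi /= ?expr0 ?expr1 //.
- by rewrite a3.
- by rewrite (exprD _ 3 1) (a3 halpha) mul1r expr1.
- by rewrite (exprD _ 3 2) (a3 halpha) mul1r.
Qed.

Lemma origR_dec l u w : (l < 6)%N -> u \in allv n -> w \in allv n ->
  origR F n alpha l (decv u) (decv w) = origK l u w.
Proof.
move=> hl hu hw; rewrite /origR /origK (alpha_pow hl).
case: ifP => hl3; rewrite hl3.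
  have hm : map (mulK l.+1) u \in allv n.
    move: hu; rewrite !allvP size_map => /andP[-> /allP h] /=.
    by apply/allP => a /mapP[b hb ->]; apply: mulK_lt => //; apply: h.
  have -> : phi l.+1 *: decv u = decv (map (mulK l.+1) u).
    have su : size u = n by move: hu; rewrite allvP => /andP[/eqP].
    apply/matrixP => i j; rewrite !mxE (nth_map 0%N); last by rewrite su.
    by rewrite phi_mul // (allv_lt _ hu).
  apply/eqP/eqP => [h|->] //; exact: (decv_inj halpha hw hm h).
rewrite herm_dec //; apply/eqP/eqP => [h|->] //.
apply: (phi_inj halpha) h; first exact: lt_hermK.
by move: hl hl3; case: l => [|[|[|[|[|[|l]]]]]].
Qed.

Lemma fuse_dec s u w : all (fun l => (l < 6)%N) s -> u \in allv n -> w \in allv n ->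
  fuse _ (origR F n alpha) s (decv u) (decv w) = has (fun l => origK l u w) s.
Proof.
move=> /allP hs hu hw; rewrite /fuse; apply: eq_in_has => l hl.
by rewrite origR_dec // hs.
Qed.

End Vec2.

Section Gen.
Variables (T : finType) (X : {set T}) (d : nat) (R : 'I_d.+1 -> rel T).
Hypothesis hpart : forall x y, x \in X -> y \in X -> exists! i, R i x y.
Hypothesis hdiag : forall x y, x \in X -> y \in X -> (R ord0 x y <-> x = y).

Local Notation N := #|X|.
Local Notation A a := (adjmx T X (R a)).

Lemma sum_card (P : pred T) :
  (\sum_(t < N) ((P (enum_val t) : nat)%:R : algC)) = #|[set z in X | P z]|%:R.
Proof.
rewrite -(big_enum_val (fun z => ((P z : nat)%:R : algC))) -natr_sum.
congr (_%:R); rewrite -sum1_card [LHS]big_mkcond [RHS]big_mkcond /=.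
by apply: eq_bigr => z _; rewrite inE; case: (z \in X); case: (P z).
Qed.

Lemma relP x y : x \in X -> y \in X -> exists k, R k x y /\ forall i, R i x y -> i = k.
Proof.
move=> hx hy; have [k [hk u]] := hpart hx hy.
by exists k; split => // i /u ->.
Qed.

Lemma lin_entry (f : 'I_d.+1 -> algC) (r s : 'I_N) k :
  R k (enum_val r) (enum_val s) ->
  (forall i, R i (enum_val r) (enum_val s) -> i = k) ->
  (\sum_a f a *: A a) r s = f k.
Proof.
move=> hk u; rewrite summxE (bigD1 k) //= big1 ?addr0.
  rewrite /adjmx !mxE. move: hk. case: (R k _ _) => // _. by rewrite mulr1.
move=> i hik; rewrite /adjmx !mxE; case: (boolP (R i _ _)) => [/u /eqP|_].
  by rewrite (negbTE hik).
by rewrite mulr0.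
Qed.

Variable p : nat -> nat -> nat -> nat.
Hypothesis hcount : forall (i j k : 'I_d.+1) x y, x \in X -> y \in X -> R k x y ->
  #|[set z in X | R i x z && R j z y]| = p i j k.

Lemma A_mul a b : A a *m A b = \sum_(k < d.+1) (p a b k)%:R *: A k.
Proof.
apply/matrixP => r s.
have [k [hk u]] := relP (enum_valP r) (enum_valP s).
rewrite (lin_entry _ hk u) !mxE.
under eq_bigr => t _ do rewrite !mxE -natrM mulnb.
by rewrite (sum_card (fun z => R a (enum_val r) z && R b z (enum_val s))) (hcount _ _ (enum_valP r) (enum_valP s) hk).
Qed.

Definition L (f : 'I_d.+1 -> algC) : 'M[algC]_N := \sum_a f a *: A a.

Lemma L_mul f g :
  L f *m L g = L (fun k => \sum_a \sum_b f a * g b * (p a b k)%:R).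
Proof.
rewrite /L mulmx_suml.
under eq_bigr => a _ do rewrite mulmx_sumr.
under eq_bigr => a _ do under eq_bigr => b _ do
  rewrite -scalemxAl -scalemxAr scalerA A_mul scaler_sumr.
under eq_bigr => a _ do rewrite exchange_big /=.
rewrite exchange_big /=; apply: eq_bigr => k _.
rewrite scaler_suml; apply: eq_bigr => a _.
rewrite scaler_suml; apply: eq_bigr => b _.
by rewrite scalerA.
Qed.

Lemma eq_L f g : f =1 g -> L f = L g.
Proof. by move=> h; apply: eq_bigr => a _; rewrite h. Qed.

Lemma L_sum (g : 'I_d.+1 -> 'I_d.+1 -> algC) :
  \sum_(i < d.+1) L (g i) = L (fun a => \sum_(i < d.+1) g i a).
Proof.
rewrite /L exchange_big /=; apply: eq_bigr => a _.
by rewrite scaler_suml.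
Qed.

Lemma L_scale s f : s *: L f = L (fun a => s * f a).
Proof.
by rewrite /L scaler_sumr; apply: eq_bigr => a _; rewrite scalerA.
Qed.

Lemma L_delta j : L (fun a => (a == j)%:R) = A j.
Proof.
rewrite /L (bigD1 j) //= eqxx scale1r big1 ?addr0 // => i /negbTE ->.
by rewrite scale0r.
Qed.

Lemma L0 : L (fun _ => 0) = 0.
Proof. by rewrite /L big1 // => a _; rewrite scale0r. Qed.

Lemma A0 : A ord0 = 1%:M.
Proof.
apply/matrixP => r s; rewrite /adjmx !mxE.
have h : R ord0 (enum_val r) (enum_val s) = (enum_val r == enum_val s).
  have hh := hdiag (enum_valP r) (enum_valP s).
  by apply/idP/eqP => /hh.
by rewrite h (inj_eq enum_val_inj).
Qed.

Lemma sumA : \sum_(a < d.+1) A a = const_mx 1.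
Proof.
apply/matrixP => r s.
have [k [hk u]] := relP (enum_valP r) (enum_valP s).
have -> : \sum_(a < d.+1) A a = L (fun _ => 1).
  by apply: eq_bigr => a _; rewrite scale1r.
by rewrite (lin_entry _ hk u) mxE.
Qed.

Lemma trA a : \tr (A a) = (a == ord0)%:R *+ N.
Proof.
rewrite /mxtrace -[in RHS](card_ord N) -sumr_const; apply: eq_bigr => r _.
rewrite /adjmx mxE.
have hx := enum_valP r.
have h0 : R ord0 (enum_val r) (enum_val r) by apply/hdiag.
have [k [hk u]] := relP hx hx.
suff -> : R a (enum_val r) (enum_val r) = (a == ord0) by [].
apply/idP/eqP => [/u ->|->] //; exact/esym/u.
Qed.

Lemma rank_idem n (E : 'M[algC]_n) : E *m E = E -> (\rank E)%:R = \tr E.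
Proof.
move=> hE.
move: (col_base E) (row_base E) (mulmx_base E) (col_base_full E) (row_base_free E).
move=> C D hCD hC hD.
have h1 : C *m (D *m C *m D) = C *m D.
  by rewrite !mulmxA hCD -mulmxA hCD hE.
have h2 := row_full_inj hC h1.
have h3 : D *m C *m D = 1%:M *m D by rewrite h2 mul1mx.
have h4 := row_free_inj hD h3.
by rewrite -[in RHS]hCD mxtrace_mulC h4 mxtrace1.
Qed.

Variables (Q : nat -> nat -> int) (Pi : nat -> nat -> int) (c : nat)
  (m : 'I_d.+1 -> nat).
Hypothesis hc : (0 < c)%N.
Hypothesis hidem : forall i j k : 'I_d.+1,
  \sum_(a < d.+1) \sum_(b < d.+1) Q a i * Q b j * (p a b k)%:Z
  = if i == j then c%:Z * Q k i else 0.
Hypothesis hsum : forall a : 'I_d.+1,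
  \sum_(i < d.+1) Q a i = if a == ord0 then c%:Z else 0.
Hypothesis hE0 : forall a : 'I_d.+1, Q a 0%N * N%:Z = c%:Z.
Hypothesis hPQ : forall a j : 'I_d.+1,
  \sum_(i < d.+1) Pi i j * Q a i = if a == j then c%:Z else 0.
Hypothesis hm : forall i : 'I_d.+1, Q 0%N i * N%:Z = (c * m i)%:Z.
Hypothesis hm0 : forall i, (0 < m i)%N.

Let cR : algC := c%:R.
Lemma cR0 : cR != 0. Proof. by rewrite pnatr_eq0 -lt0n. Qed.

Lemma intr_cast (z : int) w : z = w -> (z%:~R : algC) = w%:~R.
Proof. by move=> ->. Qed.

Definition Eid (i : 'I_d.+1) := L (fun a => cR^-1 * (Q a i)%:~R).

Lemma Eid_mul i j : Eid i *m Eid j = if i == j then Eid i else 0.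
Proof.
rewrite /Eid L_mul.
have h (k : 'I_d.+1) : \sum_(a < d.+1) \sum_(b < d.+1)
    (cR^-1 * (Q a i)%:~R) * (cR^-1 * (Q b j)%:~R) * (p a b k)%:R
  = if i == j then cR^-1 * (Q k i)%:~R else 0.
  have := intr_cast (hidem i j k); rewrite rmorph_sum /=.
  under eq_bigr => a _ do rewrite rmorph_sum /=.
  under eq_bigr => a _ do under eq_bigr => b _ do rewrite !rmorphM /= -pmulrn.
  move=> hh.
  transitivity (cR^-1 * cR^-1 *
    \sum_(a < d.+1) \sum_(b < d.+1) (Q a i)%:~R * (Q b j)%:~R * (p a b k)%:R).
    rewrite mulr_sumr; apply: eq_bigr => a _.
    rewrite mulr_sumr; apply: eq_bigr => b _.
    by rewrite !mulrA [_ * cR^-1]mulrC !mulrA.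
  rewrite hh; case: eqP => _; last by rewrite mulr0.
  rewrite rmorphM /= -pmulrn -/cR mulrA -(mulrA _ _ cR) mulVf ?cR0 //.
  by rewrite mulr1.
rewrite (eq_L h); case: eqP => _ //; exact: L0.
Qed.

Lemma tr_Eid i : \tr (Eid i) = (m i)%:R.
Proof.
rewrite /Eid /L raddf_sum /= (bigD1 ord0) //= big1 ?addr0.
  rewrite mxtraceZ trA eqxx.
  have := intr_cast (hm i); rewrite rmorphM /= -!pmulrn natrM -/cR => hh.
  by rewrite -mulrA hh mulrA mulVf ?cR0 // mul1r.
by move=> a /negbTE ha; rewrite mxtraceZ trA ha mul0rn mulr0.
Qed.

Lemma rank_Eid i : \rank (Eid i) = m i.
Proof.
apply/eqP; rewrite -(eqr_nat algC) rank_idem ?tr_Eid //.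
by rewrite Eid_mul eqxx.
Qed.

Lemma gen_table : is_char_table T X d R (\matrix_(i, j) (Pi i j)%:~R) m.
Proof.
exists Eid; split.
- exact: Eid_mul.
- move=> i; apply/eqP => h; have := rank_Eid i; rewrite h mxrank0 => h0.
  by have := hm0 i; rewrite -h0.
- rewrite L_sum -A0 -L_delta; apply: eq_L => a.
  rewrite -mulr_sumr -rmorph_sum /= (intr_cast (hsum a)).
  case: eqP => _; last by rewrite mulr0.
  by rewrite -pmulrn mulVf ?cR0.
- rewrite /Eid -sumA.
  have -> : \sum_(a < d.+1) A a = L (fun _ => 1).
    by apply: eq_bigr => a _; rewrite scale1r.
  rewrite L_scale; apply: eq_L => a.
  have := intr_cast (hE0 a); rewrite rmorphM /= -!pmulrn -/cR => hh.
  have hN : (N%:R : algC) != 0.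
    apply/eqP => h0; move: hh; rewrite h0 mulr0 => /esym/eqP; by rewrite (negbTE cR0).
  have hq : ((Q a 0%N)%:~R : algC) != 0.
    apply/eqP => h0; move: hh; rewrite h0 mul0r => /esym/eqP; by rewrite (negbTE cR0).
  by rewrite mulr1 -hh invfM mulrAC mulVf // mul1r.
- split.
  + by move=> i; exists (fun a => cR^-1 * (Q a i)%:~R).
  + move=> j; under eq_bigr => i _ do rewrite mxE.
    under eq_bigr => i _ do rewrite /Eid L_scale.
    rewrite L_sum -L_delta; apply: eq_L => a.
    have := intr_cast (hPQ a j); rewrite rmorph_sum /=.
    under eq_bigr => i _ do rewrite rmorphM /=.
    move=> hh; apply/esym.
    transitivity (cR^-1 * \sum_(i < d.+1) (Pi i j)%:~R * (Q a i)%:~R).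
      rewrite mulr_sumr; apply: eq_bigr => i _.
      by rewrite mulrCA.
    rewrite hh; case: eqP => _; last by rewrite mulr0.
    by rewrite -pmulrn -/cR mulVf ?cR0.
  + exact: rank_Eid.
Qed.

End Gen.


Section Checks.
Variables (n d : nat) (Rk : nat -> rel (seq nat)).
Definition PL := filter isPhiK (allv n).
Definition relK u w := find (fun i => Rk i u w) (iota 0 d.+1).
Definition chk_part := all (fun u => all (fun w => (relK u w < d.+1)%N &&
  all (fun i => Rk i u w == (i == relK u w)) (iota 0 d.+1)) PL) PL.
Definition chk_diag := all (fun u => all (fun w => Rk 0 u w == (u == w)) PL) PL.
Definition chk_sym := all (fun u => all (fun w =>
  all (fun i => Rk i u w == Rk i w u) (iota 0 d.+1)) PL) PL.
Definition chk_ne := all (fun i => has (fun u => has (fun w => Rk i u w) PL) PL) (iota 0 d.+1).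
Definition chk_cnt (pK : nat -> nat -> nat -> nat) := all (fun u => all (fun w =>
  all (fun i => all (fun j => count (fun v => Rk i u v && Rk j v w) PL == pK i j (relK u w))
    (iota 0 d.+1)) (iota 0 d.+1)) PL) PL.
End Checks.

Section Transfer.
Variables (F : finFieldType) (hF : #|F| = 4%N) (alpha : F)
  (halpha : 3.-primitive_root alpha) (n d : nat).
Variables (R : 'I_d.+1 -> rel 'rV[F]_n) (Rk : nat -> rel (seq nat)).
Hypothesis hR : forall (i : 'I_d.+1) u w, u \in allv n -> w \in allv n ->
  R i (decv alpha n u) (decv alpha n w) = Rk i u w.
Local Notation decv := (decv alpha n).

Lemma PhiP x : x \in Phi F n -> exists2 u, u \in PL n & decv u = x.
Proof.
have [u hu <-] := decv_surj hF halpha x.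
by rewrite (Phi_dec hF halpha hu) => hp; exists u; rewrite // mem_filter hp.
Qed.

Lemma PL_allv u : u \in PL n -> u \in allv n.
Proof. by rewrite mem_filter => /andP[]. Qed.

Lemma PL_Phi u : u \in PL n -> decv u \in Phi F n.
Proof. by move=> h; rewrite (Phi_dec hF halpha (PL_allv h)); move: h; rewrite mem_filter => /andP[]. Qed.

Hypothesis cpart : chk_part n d Rk.

Lemma relKP u w : u \in PL n -> w \in PL n ->
  (relK d Rk u w < d.+1)%N /\ forall i, (i < d.+1)%N -> Rk i u w = (i == relK d Rk u w).
Proof.
move=> hu hw; move/allP: cpart => /(_ u hu) /allP /(_ w hw) /andP[h1 /allP h2].
split => // i hi; apply/eqP; apply: h2; by rewrite mem_iota.
Qed.

Lemma part_ok x y : x \in Phi F n -> y \in Phi F n -> exists! i, R i x y.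
Proof.
move=> /PhiP[u hu <-] /PhiP[w hw <-].
have [h1 h2] := relKP hu hw.
exists (Ordinal h1); split.
  by rewrite hR ?PL_allv // h2 //=.
move=> i; rewrite hR ?PL_allv // h2 // => /eqP hi; exact: val_inj.
Qed.

Lemma relK_eq (k : 'I_d.+1) u w : u \in PL n -> w \in PL n -> R k (decv u) (decv w) ->
  relK d Rk u w = k.
Proof.
move=> hu hw; rewrite hR ?PL_allv //; have [_ h2] := relKP hu hw.
by rewrite h2 // => /eqP.
Qed.

Hypothesis cdiag : chk_diag n Rk.
Lemma diag_ok x y : x \in Phi F n -> y \in Phi F n -> (R ord0 x y <-> x = y).
Proof.
move=> /PhiP[u hu <-] /PhiP[w hw <-].
rewrite hR ?PL_allv //; move/allP: cdiag => /(_ u hu) /allP /(_ w hw) /eqP ->.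
split => [/eqP -> //|h]; apply/eqP; exact: (decv_inj halpha (PL_allv hu) (PL_allv hw) h).
Qed.

Hypothesis csym : chk_sym n d Rk.
Lemma sym_ok (i : 'I_d.+1) x y : x \in Phi F n -> y \in Phi F n -> R i x y = R i y x.
Proof.
move=> /PhiP[u hu <-] /PhiP[w hw <-].
rewrite !hR ?PL_allv //; move/allP: csym => /(_ u hu) /allP /(_ w hw) /allP h.
by apply/eqP/h; rewrite mem_iota /= ltn_ord.
Qed.

Hypothesis cne : chk_ne n d Rk.
Lemma ne_ok (i : 'I_d.+1) : exists x y, [/\ x \in Phi F n, y \in Phi F n & R i x y].
Proof.
move/allP: cne => /(_ i); rewrite mem_iota /= => /(_ (ltn_ord i)) /hasP[u hu /hasP[w hw h]].
exists (decv u), (decv w); split; try exact: PL_Phi.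
by rewrite hR ?PL_allv.
Qed.

Variable pK : nat -> nat -> nat -> nat.
Hypothesis ccnt : chk_cnt n d Rk pK.

Lemma cnt_ok (i j k : 'I_d.+1) x y : x \in Phi F n -> y \in Phi F n -> R k x y ->
  #|[set z in Phi F n | R i x z && R j z y]| = pK i j k.
Proof.
move=> /PhiP[u hu <-] /PhiP[w hw <-] hk.
rewrite -(relK_eq hu hw hk).
have -> : #|[set z in Phi F n | R i (decv u) z && R j z (decv w)]|
  = count (fun v => Rk i u v && Rk j v w) (PL n).
  transitivity #|(fun z => z \in [set z in Phi F n | R i (decv u) z && R j z (decv w)])|.
    exact: eq_card.
  rewrite (card_dec hF halpha) /PL count_filter; apply: eq_in_count => v hv /=.
  by rewrite inE (Phi_dec hF halpha hv) (hR i (PL_allv hu) hv) (hR j hv (PL_allv hw)) andbC.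
have hi : (i : nat) \in iota 0 d.+1 by rewrite mem_iota /= ltn_ord.
have hj : (j : nat) \in iota 0 d.+1 by rewrite mem_iota /= ltn_ord.
move/allP: ccnt => /(_ u hu) /allP /(_ w hw) /allP /(_ i hi) /allP /(_ j hj) /eqP.
done.
Qed.

Lemma card_Phi : #|Phi F n| = size (PL n).
Proof.
transitivity #|(fun z => z \in Phi F n)|; first exact: eq_card.
rewrite (card_dec hF halpha) /PL size_filter; apply: eq_in_count => v hv /=.
by rewrite (Phi_dec hF halpha hv).
Qed.

Lemma scheme_ok : is_assoc_scheme _ (Phi F n) d R.
Proof.
split.
- exact: part_ok.
- exact: ne_ok.
- exact: diag_ok.
- by move=> i; exists i => x y hx hy; rewrite sym_ok.
- by move=> i j k; exists (pK i j k) => x y hx hy hk; apply: cnt_ok.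
Qed.

End Transfer.

Definition sumL (f : nat -> int) (k : nat) : int := foldr (fun i acc => f i + acc) 0 (iota 0 k).

Lemma sum_iota (f : nat -> int) k : \sum_(i < k) f i = sumL f k.
Proof.
rewrite -(big_mkord xpredT f) /index_iota subn0 /sumL.
by elim: (iota 0 k) => [|a s IH]; rewrite ?big_nil ?big_cons ?IH.
Qed.

Section Num.
Variables (D : nat) (p : nat -> nat -> nat -> nat) (Q Pi : nat -> nat -> int)
  (c N : nat) (ms : seq nat).
Definition chk_num : bool :=
  [&& all (fun i => all (fun j => all (fun k =>
      sumL (fun a => sumL (fun b => Q a i * Q b j * (p a b k)%:Z) D) D
      == (if i == j then c%:Z * Q k i else 0)) (iota 0 D)) (iota 0 D)) (iota 0 D),
   all (fun a => sumL (fun i => Q a i) D == (if a == 0%N then c%:Z else 0)) (iota 0 D),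
   all (fun a => Q a 0%N * N%:Z == c%:Z) (iota 0 D),
   all (fun a => all (fun j => sumL (fun i => Pi i j * Q a i) D
      == (if a == j then c%:Z else 0)) (iota 0 D)) (iota 0 D),
   all (fun i => Q 0%N i * N%:Z == (c * nth 0%N ms i)%:Z) (iota 0 D),
   all (fun i => (0 < nth 0%N ms i)%N) (iota 0 D) & (0 < c)%N].
End Num.

Section Assemble.
Variables (F : finFieldType) (hF : #|F| = 4%N) (alpha : F)
  (halpha : 3.-primitive_root alpha) (n d : nat).
Variables (R : 'I_d.+1 -> rel 'rV[F]_n) (Rk : nat -> rel (seq nat)).
Hypothesis hR : forall (i : 'I_d.+1) u w, u \in allv n -> w \in allv n ->
  R i (decv alpha n u) (decv alpha n w) = Rk i u w.
Variables (pK : nat -> nat -> nat -> nat) (Q Pi : nat -> nat -> int) (c : nat) (ms : seq nat).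
Hypothesis cl : [&& chk_part n d Rk, chk_diag n Rk, chk_sym n d Rk, chk_ne n d Rk &
  chk_cnt n d Rk pK].
Hypothesis cn : chk_num d.+1 pK Q Pi c (size (PL n)) ms.

Lemma io (i : 'I_d.+1) : (i : nat) \in iota 0 d.+1.
Proof. by rewrite mem_iota /= ltn_ord. Qed.

Lemma assemble : is_assoc_scheme _ (Phi F n) d R /\
  is_char_table _ (Phi F n) d R (\matrix_(i, j) (Pi i j)%:~R) (fun i => nth 0%N ms i).
Proof.
case/and5P: cl => c1 c2 c3 c4 c5.
case/and5P: cn => n1 n2 n3 n4 /and3P[n5 n6 n7].
split; first exact: (scheme_ok hF halpha hR c1 c2 c3 c4 c5).
apply: (gen_table (part_ok hF halpha hR c1) (diag_ok hF halpha hR c2)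
  (cnt_ok hF halpha hR c1 c5) n7).
- move=> i j k.
  transitivity (sumL (fun a => sumL (fun b => Q a i * Q b j * (pK a b k)%:Z) d.+1) d.+1).
    by rewrite -sum_iota; apply: eq_bigr => a _; rewrite -sum_iota.
  by move/allP: n1 => /(_ _ (io i)) /allP /(_ _ (io j)) /allP /(_ _ (io k)) /eqP ->.
- move=> a; transitivity (sumL (fun i => Q a i) d.+1); first by rewrite -sum_iota.
  by move/allP: n2 => /(_ _ (io a)) /eqP ->.
- move=> a; rewrite (card_Phi hF halpha).
  by move/allP: n3 => /(_ _ (io a)) /eqP.
- move=> a j; transitivity (sumL (fun i => Pi i j * Q a i) d.+1); first by rewrite -sum_iota.
  by move/allP: n4 => /(_ _ (io a)) /allP /(_ _ (io j)) /eqP.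
- move=> i; rewrite (card_Phi hF halpha).
  by move/allP: n5 => /(_ _ (io i)) /eqP.
- by move=> i; move/allP: n6 => /(_ _ (io i)).
Qed.


End Assemble.

Definition gA : seq (seq nat) := [:: [:: 0%N]; [:: 1%N; 2%N]; [:: 3%N]; [:: 4%N; 5%N]].
Definition gB : seq (seq nat) := [:: [:: 0%N]; [:: 1%N; 2%N]; [:: 3%N; 4%N; 5%N]].
Definition symK (i : nat) (u w : seq nat) := has (fun l => origK l u w) (nth [::] gA i).
Definition fusK (i : nat) (u w : seq nat) := has (fun l => origK l u w) (nth [::] gB i).
Definition pa2 : seq (seq (seq nat)) := [:: [:: [:: 1; 0; 0; 0]; [:: 0; 1; 0; 0]; [:: 0; 0; 1; 0]; [:: 0; 0; 0; 1]]; [:: [:: 0; 1; 0; 0]; [:: 2; 1; 0; 0]; [:: 0; 0; 0; 1]; [:: 0; 0; 2; 1]]; [:: [:: 0; 0; 1; 0]; [:: 0; 0; 0; 1]; [:: 2; 0; 1; 0]; [:: 0; 2; 0; 1]]; [:: [:: 0; 0; 0; 1]; [:: 0; 0; 2; 1]; [:: 0; 2; 0; 1]; [:: 4; 2; 2; 1]]]%N.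
Definition Qa2 : seq (seq int) := [:: [:: 2; 4; 4; 8]; [:: 2; -2; 4; -4]; [:: 2; 4; -2; -4]; [:: 2; -2; -2; 2]].

Definition pb2 : seq (seq (seq nat)) := [:: [:: [:: 1; 0; 0]; [:: 0; 1; 0]; [:: 0; 0; 1]]; [:: [:: 0; 1; 0]; [:: 2; 1; 0]; [:: 0; 0; 2]]; [:: [:: 0; 0; 1]; [:: 0; 0; 2]; [:: 6; 6; 3]]]%N.
Definition Qb2 : seq (seq int) := [:: [:: 2; 4; 12]; [:: 2; 4; -6]; [:: 2; -2; 0]].

Definition pa3 : seq (seq (seq nat)) := [:: [:: [:: 1; 0; 0; 0]; [:: 0; 1; 0; 0]; [:: 0; 0; 1; 0]; [:: 0; 0; 0; 1]]; [:: [:: 0; 1; 0; 0]; [:: 2; 1; 0; 0]; [:: 0; 0; 0; 1]; [:: 0; 0; 2; 1]]; [:: [:: 0; 0; 1; 0]; [:: 0; 0; 0; 1]; [:: 8; 0; 1; 3]; [:: 0; 8; 6; 4]]; [:: [:: 0; 0; 0; 1]; [:: 0; 0; 2; 1]; [:: 0; 8; 6; 4]; [:: 16; 8; 8; 10]]]%N.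
Definition Qa3 : seq (seq int) := [:: [:: 2; 12; 16; 24]; [:: 2; -6; 16; -12]; [:: 2; -6; -2; 6]; [:: 2; 3; -2; -3]].

Definition pb3 : seq (seq (seq nat)) := [:: [:: [:: 1; 0; 0]; [:: 0; 1; 0]; [:: 0; 0; 1]]; [:: [:: 0; 1; 0]; [:: 2; 1; 0]; [:: 0; 0; 2]]; [:: [:: 0; 0; 1]; [:: 0; 0; 2]; [:: 24; 24; 21]]]%N.
Definition Qb3 : seq (seq int) := [:: [:: 2; 16; 36]; [:: 2; 16; -18]; [:: 2; -2; 0]].

Definition tab3 (t : seq (seq (seq nat))) (i j k : nat) : nat := nth 0%N (nth [::] (nth [::] t i) j) k.

Definition Qtab (t : seq (seq int)) (a i : nat) : int := nth 0 (nth [::] t a) i.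
Definition rowsA2 : seq (seq int) := [:: [:: 1; 2; 2; 4]; [:: 1; -1; 2; -2]; [:: 1; 2; -1; -2]; [:: 1; -1; -1; 1]].
Definition rowsA3 : seq (seq int) := [:: [:: 1; 2; 8; 16]; [:: 1; -1; -4; 4]; [:: 1; 2; -1; -2]; [:: 1; -1; 2; -2]].
Definition rowsB2 : seq (seq int) := [:: [:: 1; 2; 6]; [:: 1; 2; -3]; [:: 1; -1; 0]].
Definition rowsB3 : seq (seq int) := [:: [:: 1; 2; 24]; [:: 1; 2; -3]; [:: 1; -1; 0]].

Lemma clA2 : [&& chk_part 2 3 symK, chk_diag 2 symK, chk_sym 2 3 symK, chk_ne 2 3 symK &
  chk_cnt 2 3 symK (tab3 pa2)]. Proof. by vm_compute. Qed.
Lemma clA3 : [&& chk_part 3 3 symK, chk_diag 3 symK, chk_sym 3 3 symK, chk_ne 3 3 symK &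
  chk_cnt 3 3 symK (tab3 pa3)]. Proof. by vm_compute. Qed.
Lemma clB2 : [&& chk_part 2 2 fusK, chk_diag 2 fusK, chk_sym 2 2 fusK, chk_ne 2 2 fusK &
  chk_cnt 2 2 fusK (tab3 pb2)]. Proof. by vm_compute. Qed.
Lemma clB3 : [&& chk_part 3 2 fusK, chk_diag 3 fusK, chk_sym 3 2 fusK, chk_ne 3 2 fusK &
  chk_cnt 3 2 fusK (tab3 pb3)]. Proof. by vm_compute. Qed.

Lemma cnA2 : chk_num 4 (tab3 pa2) (Qtab Qa2) (Qtab rowsA2) 18 (size (PL 2)) [:: 1; 2; 2; 4]%N.
Proof. by vm_compute. Qed.
Lemma cnA3 : chk_num 4 (tab3 pa3) (Qtab Qa3) (Qtab rowsA3) 54 (size (PL 3)) [:: 1; 6; 8; 12]%N.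
Proof. by vm_compute. Qed.
Lemma cnB2 : chk_num 3 (tab3 pb2) (Qtab Qb2) (Qtab rowsB2) 18 (size (PL 2)) [:: 1; 2; 6]%N.
Proof. by vm_compute. Qed.
Lemma cnB3 : chk_num 3 (tab3 pb3) (Qtab Qb3) (Qtab rowsB3) 54 (size (PL 3)) [:: 1; 8; 18]%N.
Proof. by vm_compute. Qed.

Lemma gA_lt i : all (fun l => (l < 6)%N) (nth [::] gA i).
Proof. by case: i => [|[|[|[|i]]]] //=; rewrite nth_nil. Qed.
Lemma gB_lt i : all (fun l => (l < 6)%N) (nth [::] gB i).
Proof. by case: i => [|[|[|i]]] //=; rewrite nth_nil. Qed.

Unset Implicit Arguments.

Theorem corollary5p5 (F : finFieldType) (hF : #|F| = 4%N) (alpha : F)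
  (halpha : 3.-primitive_root alpha) (n : nat) (hn : (n == 2%N) || (n == 3%N)) :
  (is_assoc_scheme _ (Phi F n) _ (symR F n alpha)
   /\ is_char_table _ (Phi F n) _ (symR F n alpha) (tableA n) (multA n))
  /\
  (is_assoc_scheme _ (Phi F n) _ (fusR F n alpha)
   /\ is_char_table _ (Phi F n) _ (fusR F n alpha) (tableB n) (multB n)).
Proof.
have hA m : forall (i : 'I_4) u w, u \in allv m -> w \in allv m ->
    symR F m alpha i (decv alpha m u) (decv alpha m w) = symK i u w.
  by move=> i u w hu hw; rewrite /symR (fuse_dec hF halpha) // gA_lt.
have hB m : forall (i : 'I_3) u w, u \in allv m -> w \in allv m ->
    fusR F m alpha i (decv alpha m u) (decv alpha m w) = fusK i u w.
  by move=> i u w hu hw; rewrite /fusR (fuse_dec hF halpha) // gB_lt.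
case/orP: hn => /eqP ->; rewrite /tableA /multA /tableB /multB /=.
- split.
  + exact: (assemble hF halpha (hA 2%N) clA2 cnA2).
  + exact: (assemble hF halpha (hB 2%N) clB2 cnB2).
- split.
  + exact: (assemble hF halpha (hA 3%N) clA3 cnA3).
  + exact: (assemble hF halpha (hB 3%N) clB3 cnB3).
Qed.
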